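(* Let $G$ be a group, $H$ a subgroup, $A$ a complex vector space, and let $g,g_1,\dots,g_n:G\to A$ and $f_1,\dots,f_n:G\to\mathbb C$ be functions such that $\chi_H(xy)g(y)=\sum_{i=1}^n f_i(x)g_i(y)$ for all $x,y\in G$. Then there is a finite set $F\subseteq G$ such that $g(y)=0$ for all $y\notin FH$.
   Context: $\chi_H$ is the characteristic function of $H$. *)

(* Defs.v *)
From HB Require Import structures.
From mathcomp Require Import all_boot all_order all_algebra.
From mathcomp Require Import complex.
From mathcomp Require Import Rstruct.
From Stdlib Require Rdefinitions.
Set Implicit Arguments. Unset Strict Implicit. Unset Printing Implicit Defensive.
Import GRing.Theory Num.Theory.

Definition CC := (Rdefinitions.R)[i].

Definition chi (G : Type) (H : {pred G}) (x : G) : CC := ((x \in H)%:R)%R.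

Definition in_prodset (G : groupType) (F : seq G) (H : {pred G}) (y : G) : Prop :=
  exists f h, [/\ f \in F, h \in H & y = (f * h)%g].

(* Main.v *)
Require Import Defs.
From HB Require Import structures.
From mathcomp Require Import all_boot all_order all_algebra.
From mathcomp Require Import complex.
From mathcomp Require Import Rstruct.
Import GRing.Theory Num.Theory.
Local Open Scope ring_scope.
From Stdlib Require Import Classical.
From mathcomp Require Import zify.

Lemma key (G : groupType) (H : groupClosed G) (A : lmodType CC)
  (n : nat) (g : G -> A) (gs : 'I_n -> G -> A) (fs : 'I_n -> G -> CC) :
  (forall x y : G,
      (chi H (x * y)%g *: g y)%R = (\sum_(i < n) fs i x *: gs i y)%R) ->
  forall s : seq G,
  (forall j k : 'I_(size s), j != k -> ((nth 1%g s k)^-1 * nth 1%g s j)%g \notin H) ->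
  (forall j : 'I_(size s), g (nth 1%g s j) != 0) -> (size s <= n)%N.
Proof.
move=> hyp s hdist hnz; rewrite leqNgt; apply/negP => hlt.
set m := size s in hdist hnz hlt.
pose M : 'M[CC]_(m, n) := \matrix_(k, i) fs i (nth 1%g s k)^-1%g.
have nf : ~~ row_free M.
  rewrite /row_free; apply/negP => /eqP hr.
  by move: (rank_leq_col M); rewrite hr leqNgt hlt.
have : kermx M != 0 by rewrite kermx_eq0.
case/rowV0Pn => v /sub_kermxP vM vnz.
case/rV0Pn: vnz => j vj.
have E : \sum_k v 0 k *: (chi H ((nth 1%g s k)^-1 * nth 1%g s j)%g *: g (nth 1%g s j))
         = v 0 j *: g (nth 1%g s j).
  rewrite (bigD1 j) //= big1 ?addr0.
    by rewrite mulVg /chi gpred1 scale1r.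
  move=> k hk; rewrite /chi (negbTE (hdist _ _ _)); first by rewrite scale0r scaler0.
  by rewrite eq_sym.
have E2 : \sum_k v 0 k *: (chi H ((nth 1%g s k)^-1 * nth 1%g s j)%g *: g (nth 1%g s j)) = 0.
  under eq_bigr do rewrite hyp scaler_sumr.
  rewrite exchange_big /= big1 // => i _.
  under eq_bigr do rewrite scalerA.
  rewrite -scaler_suml.
  have : (v *m M) 0 i = 0 by rewrite vM mxE.
  rewrite mxE => h.
  have -> : \sum_(k < m) v 0 k * fs i (nth 1%g s k)^-1%g = \sum_k v 0 k * M k i.
    by apply: eq_bigr => k _; rewrite mxE.
  by rewrite h scale0r.
move: (hnz j); rewrite E2 in E.
by move/eqP: E; rewrite eq_sym scaler_eq0 (negbTE vj) /= => /eqP ->; rewrite eqxx.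
Qed.

Lemma aux (a n k : nat) : (a.+1 <= n)%N -> (n - a <= k.+1)%N -> (n - a.+1 <= k)%N.
Proof. lia. Qed.

Lemma invmem (G : groupType) (H : groupClosed G) (a b : G) :
  ((a^-1 * b)%g \in H) = ((b^-1 * a)%g \in H).
Proof. by rewrite -(gpredV H) invgM invgK. Qed.

Theorem lemma1p6 (G : groupType) (H : groupClosed G) (A : lmodType CC)
  (n : nat) (g : G -> A) (gs : 'I_n -> G -> A) (fs : 'I_n -> G -> CC) :
  (forall x y : G,
      (chi H (x * y)%g *: g y)%R = (\sum_(i < n) fs i x *: gs i y)%R) ->
  exists F : seq G, forall y : G, ~ in_prodset F H y -> g y = 0%R.
Proof.
move=> hyp.
pose good (s : seq G) := all (fun y => g y != 0) s &&
   pairwise (fun a b => (a^-1 * b)%g \notin H) s.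
have gsz : forall s, good s -> (size s <= n)%N.
  move=> s /andP[ha hp]; apply: (@key _ _ _ _ _ _ _ hyp s).
    move=> j k; rewrite neq_ltn => /orP[] jk.
      by move/(pairwiseP 1%g): hp => /(_ j k (ltn_ord j) (ltn_ord k) jk); rewrite invmem.
    by move/(pairwiseP 1%g): hp => /(_ k j (ltn_ord k) (ltn_ord j) jk).
  by move=> j; move/allP: ha; apply; apply: mem_nth.
suff : forall k s, good s -> (n - size s <= k)%N ->
   exists F : seq G, forall y : G, ~ in_prodset F H y -> g y = 0%R.
  by move/(_ n [::] isT); apply; rewrite subn0.
elim=> [|k IH] s gs_ hk.
- exists s => y hy; apply/eqP; apply/negP => /negP gy.
  have gys : good (y :: s).
    case/andP: gs_ => ha hp; rewrite /good /= gy ha hp /= andbT.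
    apply/allP => b bs; apply/negP => hb; apply: hy.
    exists b, (b^-1 * y)%g; split => //; first by rewrite invmem.
    by rewrite mulVKg.
  by move: (gsz _ gys) hk => /= h1; rewrite leqn0 subn_eq0 => h2; move: (leq_trans h1 h2); rewrite ltnn.
- case: (classic (exists y, g y != 0 /\ ~ in_prodset s H y)) => [[y [gy hy]]|hno].
    have gys : good (y :: s).
      case/andP: gs_ => ha hp; rewrite /good /= gy ha hp /= andbT.
      apply/allP => b bs; apply/negP => hb; apply: hy.
      exists b, (b^-1 * y)%g; split => //; first by rewrite invmem.
      by rewrite mulVKg.
    apply: (IH (y :: s) gys).
    by move: (gsz _ gys) hk => /=; apply: aux.
  exists s => y hy; apply/eqP; apply/negP => /negP gy; apply: hno; exists y; split => //.
Qed.
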